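(* Let $q=2^r$ with $r\ge 4$ (so $q=4k$ with $k=2^{r-2}$, $r-2\ge 2$). Let $G_1,G_2,G_3\subseteq\mathfrak S_q$ be the groups defined below, and for $s=1,2,3$ let $f_s\in\mathbb F_q[X,Y]$ be a local permutation polynomial whose permutation polynomial tuple consists of the $q$ elements of $G_s$ (in some order). Then, for every $0\le e<r$, none of $f_1,f_2,f_3$ is equivalent to an $e$-Klenian polynomial over $\mathbb F_q$, and $f_1,f_2,f_3$ are pairwise inequivalent.
   Context: The elements of $\mathbb F_q$ are enumerated as $\mathbb F_q=\{c_0,\dots,c_{q-1}\}$; $\mathfrak S_q$ is the symmetric group of permutations of $\mathbb F_q$, composed right to left, $(\sigma\tau)(x)=\sigma(\tau(x))$, written in cycle notation. LPPs and tuples: every function $\mathbb F_q^2\to\mathbb F_q$ is identified with the unique polynomial in $\mathbb F_q[X,Y]$ of degree $<q$ in each variable representing it. $f\in\mathbb F_q[X,Y]$ is a local permutation polynomial (LPP) if $x\mapsto f(x,y_0)$ and $y\mapsto f(x_0,y)$ are permutations of $\mathbb F_q$ for all $x_0,y_0\in\mathbb F_q$. A permutation polynomial tuple is $(\beta_0,\dots,\beta_{q-1})\in\mathfrak S_q^q$ such that $\beta_i^{-1}\beta_j$ has no fixed point whenever $i\neq j$. LPPs $f$ correspond bijectively to permutation polynomial tuples $\underline\beta_f=(\beta_0,\dots,\beta_{q-1})$ via $f(x,\beta_i(x))=c_i$ for all $x\in\mathbb F_q$ and all $0\le i\le q-1$. Two LPPs $f,g$ with tuples $(\beta_0,\dots,\beta_{q-1})$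 and $(\gamma_0,\dots,\gamma_{q-1})$ are equivalent if there exist $\sigma,\lambda\in\mathfrak S_q$ with $\gamma_i=\sigma\beta_i\lambda$ for all $i$. $e$-Klenian polynomials: for $q=p^r$ ($p$ prime), $0\le e<r$, $\ell=p^e$, $t=q/\ell$, let $\alpha=\prod_{i=0}^{t-1}(c_{i\ell},c_{i\ell+1},\dots,c_{(i+1)\ell-1})$ and $\beta=\prod_{j=0}^{\ell-1}(c_j,c_{j+\ell},\dots,c_{j+(t-1)\ell})$, and $G=\{\alpha^i\beta^j:0\le i\le\ell-1,0\le j\le t-1\}$ (a subgroup of $\mathfrak S_q$ of order $q$ whose non-identity elements have no fixed points). An $e$-Klenian polynomial is an LPP whose permutation polynomial tuple consists of the $q$ elements of $G$ in some order. The groups: with $k=q/4$, let $a=(c_0,c_1)(c_2,c_3)\cdots(c_{q-2},c_{q-1})$ in all three cases. $G_1=\{b_1^ja^i:0\le j\le 2k-1,0\le i\le1\}$ where $b_1=C_1C_2$, $C_1$ the cycle with entries in order: for $m=0,\dots,\frac{k-2}{2}$ the pair $c_{2m},c_{2(2m+k-1)}$; then for $n=0,\dots,\frac{k-4}{2}$ the pair $c_{2n+k},c_{2(2n+k)}$; then $c_{4k-1},c_{4k-4}$; and $C_2$ the cycle with entries in order: for $m=0,\dots,\frac{k-2}{2}$ the pair $c_{2m+1},c_{2(2m+k)+1}$; then for $n=0,\dots,\frac{k-4}{2}$ the pair $c_{2n+k+1},c_{2(2n+k)-1}$; then $c_{4k-2},c_{4k-5}$. $G_2=\{b_2^ja^i:0\le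 j\le \frac q2-1,0\le i\le1\}$ where $b_2=(c_{\frac q2-2},c_{\frac q2-4},\dots,c_2,c_0,c_{\frac q2},c_{\frac q2+2},\dots,c_{q-2})(c_1,c_3,\dots,c_{\frac q2-1},c_{q-1},c_{q-3},\dots,c_{\frac q2+1})$. $G_3=\{b_3^ja^i:0\le j\le 2k-1,0\le i\le1\}$ where $b_3=D_1D_2$, $D_1$ the cycle with entries in order: for $i=0,\dots,\frac{k-2}{2}$ the pair $c_{2i},c_{2i+2k+1}$; then $c_{k+1},c_{3k}$; then for $j=0,\dots,\frac{k-4}{2}$ the pair $c_{k+2j+2},c_{3k+2j+2}$; and $D_2$ the cycle with entries in order: for $j=0,\dots,\frac{k-4}{2}$ the pair $c_{3k-2-2j},c_{2k-1-2j}$; then $c_{2k},c_k$; then for $i=0,\dots,\frac{k-2}{2}$ the pair $c_{4k-1-2i},c_{k-1-2i}$. Each $G_s$ is a subgroup of $\mathfrak S_q$ of order $q$ whose non-identity elements have no fixed points. *)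

(* Defs.v *)
From mathcomp Require Import all_boot all_order all_algebra all_fingroup.
Set Implicit Arguments. Unset Strict Implicit. Unset Printing Implicit Defensive.

(* Elements of F_q are c_0,...,c_{q-1}; permutations of F_q are described
   through permutations of the indices 0..q-1 (functions nat -> nat). *)

Definition cyc (s : seq nat) (n : nat) : nat :=
  if n \in s then nth 0 s ((index n s).+1 %% size s) else n.

Definition cycles (cs : seq (seq nat)) : nat -> nat :=
  foldr (fun s g => cyc s \o g) id cs.

Definition perm_a (q : nat) : nat -> nat :=
  cycles [seq [:: 2 * m; 2 * m + 1] | m <- iota 0 (q %/ 2)].

Definition cycle_C1 (k : nat) : seq nat :=
  flatten [seq [:: 2 * m; 2 * (2 * m + k - 1)] | m <- iota 0 (k %/ 2)]
  ++ flatten [seq [:: 2 * n + k; 2 * (2 * n + k)] | n <- iota 0 (k %/ 2 - 1)]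
  ++ [:: 4 * k - 1; 4 * k - 4].
Definition cycle_C2 (k : nat) : seq nat :=
  flatten [seq [:: 2 * m + 1; 2 * (2 * m + k) + 1] | m <- iota 0 (k %/ 2)]
  ++ flatten [seq [:: 2 * n + k + 1; 2 * (2 * n + k) - 1] | n <- iota 0 (k %/ 2 - 1)]
  ++ [:: 4 * k - 2; 4 * k - 5].
Definition perm_b1 (q : nat) : nat -> nat :=
  cycles [:: cycle_C1 (q %/ 4); cycle_C2 (q %/ 4)].

Definition perm_b2 (q : nat) : nat -> nat :=
  cycles [:: rev [seq 2 * m | m <- iota 0 (q %/ 4)]
              ++ [seq q %/ 2 + 2 * m | m <- iota 0 (q %/ 4)];
             [seq 2 * m + 1 | m <- iota 0 (q %/ 4)]
              ++ rev [seq q %/ 2 + 1 + 2 * m | m <- iota 0 (q %/ 4)]].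

Definition cycle_D1 (k : nat) : seq nat :=
  flatten [seq [:: 2 * i; 2 * i + 2 * k + 1] | i <- iota 0 (k %/ 2)]
  ++ [:: k + 1; 3 * k]
  ++ flatten [seq [:: k + 2 * j + 2; 3 * k + 2 * j + 2] | j <- iota 0 (k %/ 2 - 1)].
Definition cycle_D2 (k : nat) : seq nat :=
  flatten [seq [:: 3 * k - 2 - 2 * j; 2 * k - 1 - 2 * j] | j <- iota 0 (k %/ 2 - 1)]
  ++ [:: 2 * k; k]
  ++ flatten [seq [:: 4 * k - 1 - 2 * i; k - 1 - 2 * i] | i <- iota 0 (k %/ 2)].
Definition perm_b3 (q : nat) : nat -> nat :=
  cycles [:: cycle_D1 (q %/ 4); cycle_D2 (q %/ 4)].

(* G_s = { b_s^j a^i : 0 <= j < q/2, 0 <= i < 2 }  (b^j a^i : apply a^i first) *)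
Definition Gs_elt (b : nat -> nat) (q : nat) (j i : nat) : nat -> nat :=
  fun n => iter j b (iter i (perm_a q) n).

(* e-Klenian: l = 2^e (p = 2 here; stated for general p via l), t = q / l *)
Definition perm_alpha (q l : nat) : nat -> nat :=
  cycles [seq iota (i * l) l | i <- iota 0 (q %/ l)].
Definition perm_beta (q l : nat) : nat -> nat :=
  cycles [seq [seq j + m * l | m <- iota 0 (q %/ l)] | j <- iota 0 l].
Definition Klein_elt (q l : nat) (i j : nat) : nat -> nat :=
  fun n => iter i (perm_alpha q l) (iter j (perm_beta q l) n).

Section LPP.
Variables (q : nat) (F : finFieldType) (c : 'I_q -> F) (d : F -> 'I_q).

(* functions F^2 -> F are identified with their reduced polynomials *)
Definition is_LPP (f : F -> F -> F) : Prop :=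
  (forall y, bijective (fun x => f x y)) /\ (forall x, bijective (f x)).

Definition tuple_of (f : F -> F -> F) (beta : 'I_q -> {perm F}) : Prop :=
  forall i x, f x (beta i x) = c i.

(* g : {perm F} is the permutation c_n |-> c_{P n} (d is the inverse of c) *)
Definition represents (g : {perm F}) (P : nat -> nat) : Prop :=
  forall x, nat_of_ord (d (g x)) = P (nat_of_ord (d x)).

Definition consists_of (beta : 'I_q -> {perm F})
    (elt : nat -> nat -> nat -> nat) (n1 n2 : nat) : Prop :=
  (forall i, exists u v, [/\ u < n1, v < n2 & represents (beta i) (elt u v)])
  /\ (forall u v, u < n1 -> v < n2 -> exists i, represents (beta i) (elt u v)).

Definition LPP_equiv (f g : F -> F -> F) : Prop :=
  exists (beta gamma : 'I_q -> {perm F}) (sigma lambda : {perm F}),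
    [/\ tuple_of f beta, tuple_of g gamma &
        forall i x, gamma i x = sigma (beta i (lambda x))].

Definition is_eKlenian (e : nat) (g : F -> F -> F) : Prop :=
  is_LPP g /\ exists beta, tuple_of g beta /\
    consists_of beta (Klein_elt q (2 ^ e)) (2 ^ e) (q %/ 2 ^ e).

Definition is_Gs_poly (b : nat -> nat) (f : F -> F -> F) : Prop :=
  is_LPP f /\ exists beta, tuple_of f beta /\
    consists_of beta (Gs_elt b q) (q %/ 2) 2.
End LPP.

(* Main.v *)
Require Import Defs.
From mathcomp Require Import all_boot all_order all_algebra all_fingroup zify.
Set Implicit Arguments. Unset Strict Implicit. Unset Printing Implicit Defensive.

Ltac crunch := first [ lia | case: ifP => ?; crunch ].

Lemma cyc_notin s n : n \notin s -> cyc s n = n.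
Proof. by rewrite /cyc => /negbTE ->. Qed.

Lemma cyc_nth s i : uniq s -> i < size s ->
  cyc s (nth 0 s i) = nth 0 s (i.+1 %% size s).
Proof. by move=> us lti; rewrite /cyc mem_nth // index_uniq. Qed.

Lemma cycles_cat s1 s2 n : cycles (s1 ++ s2) n = cycles s1 (cycles s2 n).
Proof.
rewrite /cycles foldr_cat; elim: s1 => //= C s1 IH.
by rewrite IH.
Qed.

Lemma cycles_out (cs : seq (seq nat)) n : (forall C, C \in cs -> n \notin C) -> cycles cs n = n.
Proof.
elim: cs => //= C cs IH H.
rewrite IH ?cyc_notin ?H ?mem_head // => C' HC'.
by apply: H; rewrite in_cons HC' orbT.
Qed.

Lemma cycles_one (h : nat -> seq nat) N x n : x < N -> n \in h x ->
  (forall y, y < N -> y != x -> n \notin h y /\ cyc (h x) n \notin h y) ->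
  cycles [seq h y | y <- iota 0 N] n = cyc (h x) n.
Proof.
elim: N => // N IH ltx nin H.
rewrite -addn1 iotaD map_cat cycles_cat /= add0n.
case: (ltnP x N) => [ltxN | lexN].
- rewrite cyc_notin; last first.
    by case: (H N (leqnn _)) => //; rewrite neq_ltn ltxN orbT.
  apply: IH => // y lty neq; apply: H => //; exact: ltnW.
- have eNx : x = N by lia.
  subst x. rewrite cycles_out // => C /mapP [y]; rewrite mem_iota => /andP [_ lty] ->.
  case: (H y _ _) => //; first by rewrite add0n in lty; lia.
  by rewrite add0n in lty; rewrite neq_ltn lty.
Qed.


Lemma cyc2l a b : a != b -> cyc [:: a; b] a = b.
Proof. by move=> ne; rewrite /cyc !inE eqxx /= eqxx. Qed.
Lemma cyc2r a b : a != b -> cyc [:: a; b] b = a.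
Proof.
move=> ne; rewrite /cyc !inE eqxx orbT /=.
by case: eqP => [e|_]; [rewrite e eqxx in ne|rewrite /= eqxx].
Qed.

Lemma cyc_pair m n : n./2 = m ->
  cyc [:: 2 * m; 2 * m + 1] n = if odd n then n.-1 else n.+1.
Proof.
move=> e; have ne : 2 * m != 2 * m + 1 by lia.
case: (boolP (odd n)) => on.
- have -> : n = 2 * m + 1 by lia. rewrite cyc2r //; lia.
- have -> : n = 2 * m by lia. rewrite cyc2l //; lia.
Qed.

Lemma perm_aE N n : perm_a (2 * N) n =
  if n < 2 * N then (if odd n then n.-1 else n.+1) else n.
Proof.
rewrite /perm_a mulKn //.
case: ltnP => [lt | ge].
- rewrite (@cycles_one (fun m => [:: 2 * m; 2 * m + 1]) N n./2 n).
  + exact: cyc_pair.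
  + lia.
  + rewrite !inE; apply/orP; case: (boolP (odd n)) => on; [right|left]; apply/eqP; lia.
  + move=> y lty neq; rewrite (cyc_pair (erefl _)) !inE.
    case: (boolP (odd n)) => on; split; apply/negP; case/orP => /eqP; lia.
- rewrite cycles_out // => C /mapP [y]; rewrite mem_iota => /andP [_ lty] ->.
  rewrite !inE; apply/negP; case/orP => /eqP; lia.
Qed.


Lemma modL x y L w : x = y + L * w -> x %% L = y %% L.
Proof. by move->; rewrite addnC mulnC modnMDl. Qed.

Lemma mod_aux c m Y L : (c + m * (Y %% L)) %% L = (c + m * Y) %% L.
Proof. by rewrite -modnDmr modnMmr modnDmr. Qed.

Section Pos.
Variables (P1 P2 : nat -> nat) (L : nat).
Hypothesis HL : 0 < L.
Hypothesis Huniq : uniq (mkseq P1 L ++ mkseq P2 L).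
Hypothesis Hbound : forall i, i < L -> P1 i < 2 * L /\ P2 i < 2 * L.

Definition bf n := cyc (mkseq P1 L) (cyc (mkseq P2 L) n).

Lemma u1 : uniq (mkseq P1 L). Proof. by move: Huniq; rewrite cat_uniq => /and3P []. Qed.
Lemma u2 : uniq (mkseq P2 L). Proof. by move: Huniq; rewrite cat_uniq => /and3P []. Qed.
Lemma disj x : x \in mkseq P1 L -> x \notin mkseq P2 L.
Proof.
move=> x1; move: Huniq; rewrite cat_uniq => /and3P [_ /hasPn H _].
by apply/negP => x2; move: (H x x2); rewrite x1.
Qed.

Lemma inP1 i : i < L -> P1 i \in mkseq P1 L.
Proof. by move=> lt; rewrite -(nth_mkseq 0 P1 lt) mem_nth // size_mkseq. Qed.
Lemma inP2 i : i < L -> P2 i \in mkseq P2 L.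
Proof. by move=> lt; rewrite -(nth_mkseq 0 P2 lt) mem_nth // size_mkseq. Qed.

Lemma bP1 i : i < L -> bf (P1 i) = P1 (i.+1 %% L).
Proof.
move=> lt; rewrite /bf (@cyc_notin (mkseq P2 L)); last exact: (disj (inP1 lt)).
by rewrite -{1}(nth_mkseq 0 P1 lt) cyc_nth ?u1 ?size_mkseq // nth_mkseq // ltn_mod.
Qed.

Lemma bP2 i : i < L -> bf (P2 i) = P2 (i.+1 %% L).
Proof.
move=> lt; rewrite /bf -{1}(nth_mkseq 0 P2 lt) cyc_nth ?u2 ?size_mkseq //.
rewrite nth_mkseq ?ltn_mod // cyc_notin //.
apply/negP => x1; move: (disj x1); rewrite inP2 // ltn_mod //.
Qed.

Lemma bout n : n \notin mkseq P1 L -> n \notin mkseq P2 L -> bf n = n.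
Proof. by move=> n1 n2; rewrite /bf (cyc_notin n2) (cyc_notin n1). Qed.

Lemma iterP1 j i : i < L -> iter j bf (P1 i) = P1 ((i + j) %% L).
Proof.
move=> lt; elim: j => [|j IH]; first by rewrite addn0 modn_small.
by rewrite iterS IH bP1 ?ltn_mod // -[(_ %% L).+1]addn1 modnDml addn1 addnS.
Qed.
Lemma iterP2 j i : i < L -> iter j bf (P2 i) = P2 ((i + j) %% L).
Proof.
move=> lt; elim: j => [|j IH]; first by rewrite addn0 modn_small.
by rewrite iterS IH bP2 ?ltn_mod // -[(_ %% L).+1]addn1 modnDml addn1 addnS.
Qed.

Lemma out_big n : 2 * L <= n -> n \notin mkseq P1 L /\ n \notin mkseq P2 L.
Proof.
move=> ge; split; apply/negP => /mapP [i]; rewrite mem_iota => /andP [_ lt] e;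
  case: (Hbound lt); lia.
Qed.

Lemma iter_out j n : 2 * L <= n -> iter j bf n = n.
Proof.
move=> ge; elim: j => // j IH; rewrite iterS IH.
by case: (out_big ge) => n1 n2; rewrite bout.
Qed.

Lemma cover n : n < 2 * L ->
  (exists2 i, i < L & n = P1 i) \/ (exists2 i, i < L & n = P2 i).
Proof.
move=> lt.
have sub : {subset mkseq P1 L ++ mkseq P2 L <= iota 0 (2 * L)}.
  move=> x; rewrite mem_cat mem_iota add0n => /orP [] /mapP [i];
    rewrite mem_iota => /andP [_ lti] ->; case: (Hbound lti) => //.
have szle : size (iota 0 (2 * L)) <= size (mkseq P1 L ++ mkseq P2 L).
  by rewrite size_cat !size_mkseq size_iota; lia.
have [_ eqi] := uniq_min_size Huniq sub szle.
have : n \in mkseq P1 L ++ mkseq P2 L by rewrite eqi mem_iota.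
rewrite mem_cat => /orP [] /mapP [i]; rewrite mem_iota => /andP [_ lti] ->.
- by left; exists i.
- by right; exists i.
Qed.

Lemma iterL n : iter L bf n = n.
Proof.
case: (ltnP n (2 * L)) => [lt | ge]; last exact: iter_out.
case: (cover lt) => [] [i lti ->].
- by rewrite iterP1 // modnDr modn_small.
- by rewrite iterP2 // modnDr modn_small.
Qed.

Lemma iter_ne t : 0 < t < L -> iter t bf (P1 0) != P1 0.
Proof.
move=> /andP [t0 tL]; rewrite iterP1 // add0n modn_small //.
rewrite -(nth_mkseq 0 P1 tL) -(nth_mkseq 0 P1 HL) nth_uniq ?size_mkseq ?u1 //.
by rewrite -lt0n.
Qed.

Variables (af : nat -> nat) (m c1 c2 w u u' : nat).
Hypothesis Ha1 : forall i, i < L -> af (P1 i) = P2 ((c1 + m * i) %% L).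
Hypothesis Haa : forall n, af (af n) = n.
Hypothesis Haout : forall n, 2 * L <= n -> af n = n.
Hypothesis Hm : m * m = 1 + L * w.
Hypothesis Hc : c2 + m * c1 = L * u.
Hypothesis Hc' : c1 + m * c2 = L * u'.

Lemma Ha2 j : j < L -> af (P2 j) = P1 ((c2 + m * j) %% L).
Proof.
move=> lt; set i := (c2 + m * j) %% L.
have ltiL : i < L by rewrite ltn_mod.
have : (c1 + m * i) %% L = j.
  rewrite mod_aux (@modL _ j _ (u' + w * j)) ?modn_small //.
  have Hmi : m * m * j = j + L * w * j by rewrite Hm; nia.
  nia.
by move=> e; rewrite -{1}e -(Ha1 ltiL) Haa.
Qed.

Lemma relation n : af (bf (af n)) = iter m bf n.
Proof.
case: (ltnP n (2 * L)) => [lt | ge]; last first.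
  by case: (out_big ge) => n1 n2; rewrite (Haout ge) bout // (Haout ge) iter_out.
case: (cover lt) => [] [i lti ->].
- rewrite Ha1 // bP2 ?ltn_mod // Ha2 ?ltn_mod // iterP1 //; congr P1.
  rewrite -addn1 modnDml mod_aux (@modL _ (i + m) _ (u + w * i)) //.
  have Hmi : m * m * i = i + L * w * i by rewrite Hm; nia.
  nia.
- rewrite Ha2 // bP1 ?ltn_mod // Ha1 ?ltn_mod // iterP2 //; congr P2.
  rewrite -addn1 modnDml mod_aux (@modL _ (i + m) _ (u' + w * i)) //.
  have Hmi : m * m * i = i + L * w * i by rewrite Hm; nia.
  nia.
Qed.

End Pos.


Definition pairs (f g : nat -> nat) a N := flatten [seq [:: f m; g m] | m <- iota a N].

Lemma size_pairs f g a N : size (pairs f g a N) = 2 * N.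
Proof. elim: N a => // N IH a; rewrite /pairs /= IH; lia. Qed.

Lemma nth_pairs f g a N i : i < 2 * N ->
  nth 0 (pairs f g a N) i = if odd i then g (a + i./2) else f (a + i./2).
Proof.
elim: N a i => [|N IH] a i lt; first lia.
rewrite /pairs /=.
case: i lt => [|[|i]] lt /=.
- by rewrite addn0.
- by rewrite addn0.
- rewrite -/(pairs f g a.+1 N) IH; last lia.
  by rewrite negbK !addSnnS.
Qed.

Lemma uniq_inj (P1 P2 : nat -> nat) L :
  (forall i j, i < 2 * L -> j < 2 * L ->
     (if i < L then P1 i else P2 (i - L)) = (if j < L then P1 j else P2 (j - L)) -> i = j) ->
  uniq (mkseq P1 L ++ mkseq P2 L).
Proof.
move=> H.
have -> : mkseq P1 L ++ mkseq P2 L =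
   mkseq (fun i => if i < L then P1 i else P2 (i - L)) (2 * L).
  rewrite /mkseq mul2n -addnn iotaD map_cat; congr (_ ++ _).
    by apply/eq_in_map => x; rewrite mem_iota => /andP [_ ->].
  rewrite add0n (_ : iota L L = map (addn L) (iota 0 L)); last by rewrite -iotaDl addn0.
  rewrite -map_comp; apply/eq_in_map => x.
  rewrite mem_iota => /andP [_ ltx] /=; rewrite ltnNge leq_addr /=; congr P2; lia.
rewrite /mkseq map_inj_in_uniq ?iota_uniq // => x y.
rewrite !mem_iota !add0n => /andP [_ ltx] /andP [_ lty]; exact: H.
Qed.


Definition Pshape (f1 g1 f2 g2 : nat -> nat) N1 N2 (x y : nat) i :=
  if i < 2 * N1 then (if odd i then g1 (i./2) else f1 (i./2))
  else if i < 2 * N1 + 2 * N2 then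
    (if odd (i - 2 * N1) then g2 ((i - 2 * N1)./2) else f2 ((i - 2 * N1)./2))
  else if i == 2 * N1 + 2 * N2 then x else y.

Lemma shape_eq f1 g1 f2 g2 N1 N2 x y :
  pairs f1 g1 0 N1 ++ pairs f2 g2 0 N2 ++ [:: x; y] =
  mkseq (Pshape f1 g1 f2 g2 N1 N2 x y) (2 * N1 + 2 * N2 + 2).
Proof.
apply: (@eq_from_nth _ 0).
  rewrite size_mkseq !size_cat !size_pairs /=; lia.
move=> i; rewrite !size_cat !size_pairs /= => lti.
rewrite nth_mkseq; last lia.
rewrite /Pshape nth_cat size_pairs.
case: ifP => h1; first by rewrite nth_pairs.
rewrite nth_cat size_pairs; case: ifP => h2.
  by rewrite ifT ?nth_pairs //; lia.
rewrite ifF; last lia.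
case: ifP => /eqP h3.
  by have -> : i - 2 * N1 - 2 * N2 = 0 by lia.
by have -> : i - 2 * N1 - 2 * N2 = 1 by lia.
Qed.

Definition Pshape2 (f1 g1 f2 g2 : nat -> nat) N1 (x y : nat) i :=
  if i < 2 * N1 then (if odd i then g1 (i./2) else f1 (i./2))
  else if i == 2 * N1 then x else if i == 2 * N1 + 1 then y
  else (if odd (i - 2 * N1 - 2) then g2 ((i - 2 * N1 - 2)./2) else f2 ((i - 2 * N1 - 2)./2)).

Lemma shape2_eq f1 g1 f2 g2 N1 N2 x y :
  pairs f1 g1 0 N1 ++ [:: x; y] ++ pairs f2 g2 0 N2 =
  mkseq (Pshape2 f1 g1 f2 g2 N1 x y) (2 * N1 + 2 + 2 * N2).
Proof.
apply: (@eq_from_nth _ 0).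
  rewrite size_mkseq !size_cat !size_pairs /=; lia.
move=> i; rewrite !size_cat !size_pairs /= => lti.
rewrite nth_mkseq; last lia.
rewrite /Pshape2 nth_cat size_pairs.
case: ifP => h1; first by rewrite nth_pairs.
case: ifP => /eqP h2.
  by have -> : i - 2 * N1 = 0 by lia.
case: ifP => /eqP h3.
  by have -> : i - 2 * N1 = 1 by lia.
have -> : i - 2 * N1 = (i - 2 * N1 - 2).+2 by lia.
rewrite /= nth_pairs; last lia.
have -> : (i - 2 * N1 - 2).+2 - 2 = i - 2 * N1 - 2 by lia.
by rewrite add0n.
Qed.


Ltac ev2 := repeat first [ rewrite ifT; [|lia] | rewrite ifF; [|lia] ].
Definition af k n := if n < 2 * (2 * k) then (if odd n then n.-1 else n.+1) else n.
Ltac split_ev := ev2; first [ solve [try rewrite /af; ev2; lia] | case: ifP => ?; split_ev ].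

Lemma uniq_cover (P1 P2 : nat -> nat) L :
  (forall i, i < L -> P1 i < 2 * L /\ P2 i < 2 * L) ->
  (forall n, n < 2 * L -> (exists2 i, i < L & P1 i = n) \/ (exists2 i, i < L & P2 i = n)) ->
  uniq (mkseq P1 L ++ mkseq P2 L).
Proof.
move=> Bd Cv.
apply: (@leq_size_uniq _ (iota 0 (2 * L))); first exact: iota_uniq.
- move=> n; rewrite mem_iota add0n => /andP [_ ln].
  rewrite mem_cat; case: (Cv n ln) => [] [i li <-]; apply/orP; [left|right];
   apply/mapP; exists i => //; rewrite mem_iota; lia.
- by rewrite size_cat !size_mkseq size_iota; lia.
Qed.

Definition P1b1 k := Pshape (fun m => 2 * m) (fun m => 2 * (2 * m+k-1)) (fun n => 2 * n+k)
  (fun n => 2 * (2 * n+k)) (k%/2) (k%/2-1) (4 * k-1) (4 * k-4).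
Definition P2b1 k := Pshape (fun m => 2 * m+1) (fun m => 2 * (2 * m+k)+1) (fun n => 2 * n+k+1)
  (fun n => 2 * (2 * n+k)-1) (k%/2) (k%/2-1) (4 * k-2) (4 * k-5).

Lemma C1b1 h : 0 < h -> cycle_C1 (2 * h) = mkseq (P1b1 (2 * h)) (2 * (2 * h)).
Proof. by move=> h0; rewrite /cycle_C1 shape_eq; congr mkseq; lia. Qed.
Lemma C2b1 h : 0 < h -> cycle_C2 (2 * h) = mkseq (P2b1 (2 * h)) (2 * (2 * h)).
Proof. by move=> h0; rewrite /cycle_C2 shape_eq; congr mkseq; lia. Qed.


Lemma b1_bound h i : 1 < h -> i < 2 * (2 * h) ->
  P1b1 (2 * h) i < 2 * (2 * (2 * h)) /\ P2b1 (2 * h) i < 2 * (2 * (2 * h)).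
Proof.
move=> h1 li; have e2 : 2 * h %/ 2 = h by lia.
rewrite /P1b1 /P2b1 /Pshape /= e2; split; split_ev.
Qed.

Lemma b1_cover h n : 1 < h -> n < 2 * (2 * (2 * h)) ->
  (exists2 i, i < 2 * (2 * h) & P1b1 (2 * h) i = n) \/
  (exists2 i, i < 2 * (2 * h) & P2b1 (2 * h) i = n).
Proof.
move=> h1 ln.
have e2 : 2 * h %/ 2 = h by lia.
rewrite /P1b1 /P2b1 /Pshape /= e2.
case: (boolP (odd n)) => on.
- case: (ltnP n (4 * h - 2)) => r1.
    by right; exists (n - 1); [lia | split_ev].
  case: (boolP (odd n./2)) => os.
  + case: (ltnP n (8 * h - 5)) => r2.
      by right; exists (n./2 + 2); [lia | split_ev].
    case: (ltnP n (8 * h - 4)) => r3.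
      by right; exists (4 * h - 1); [lia | split_ev].
    by left; exists (4 * h - 2); [lia | split_ev].
  + by right; exists (n./2 + 1 - 2 * h); [lia | split_ev].
- case: (ltnP n (4 * h - 2)) => r1.
    by left; exists n; [lia | split_ev].
  case: (boolP (odd n./2)) => os.
  + case: (ltnP n (8 * h - 2)) => r2.
      by left; exists (n./2 + 2 - 2 * h); [lia | split_ev].
    by right; exists (4 * h - 2); [lia | split_ev].
  + case: (ltnP n (8 * h - 4)) => r2.
      by left; exists (n./2 + 1); [lia | split_ev].
    by left; exists (4 * h - 1); [lia | split_ev].
Qed.

Lemma b1_uniq h : 1 < h -> uniq (mkseq (P1b1 (2 * h)) (2 * (2 * h)) ++ mkseq (P2b1 (2 * h)) (2 * (2 * h))).
Proof.
move=> h1; apply: uniq_cover => [i li|n ln]; first exact: b1_bound.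
exact: b1_cover.
Qed.

Lemma b1_a h i : 1 < h -> i < 2 * (2 * h) ->
  af (2 * h) (P1b1 (2 * h) i) = P2b1 (2 * h) ((0 + (2 * h + 1) * i) %% (2 * (2 * h))).
Proof.
move=> h1 li.
have [t ht] : exists t, i = 2 * t \/ i = 2 * t + 1 by exists i./2; lia.
have [S [hS lS]] : exists S, (0 + (2 * h + 1) * i) %% (2 * (2 * h)) = S /\
    ((i = 2 * t /\ S = i) \/ (i = 2 * t + 1 /\ i < 2 * h /\ S = i + 2 * h) \/
     (i = 2 * t + 1 /\ 2 * h <= i /\ S = i - 2 * h)).
  case: ht => ht.
    exists i; split; last lia.
    by rewrite (@modL _ i _ t) ?modn_small //; subst; nia.
  case: (ltnP i (2 * h)) => hi.
    exists (i + 2 * h); split; last lia.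
    by rewrite (@modL _ (i + 2 * h) _ t) ?modn_small //; subst; nia.
  exists (i - 2 * h); split; last lia.
  rewrite (@modL _ (i - 2 * h) _ (t + 1)) ?modn_small //; subst; nia.
rewrite hS /P1b1 /P2b1 /Pshape /=.
have -> : 2 * h %/ 2 = h by lia.
clear hS ht.
case: lS => [[e1 e2]|[[e1 [e2 e3]]|[e1 [e2 e3]]]]; subst; split_ev.
Qed.



Lemma nth_map_iota (f : nat -> nat) N i : i < N -> nth 0 [seq f m | m <- iota 0 N] i = f i.
Proof. by move=> lt; rewrite (nth_map 0) ?size_iota // nth_iota. Qed.

Lemma nth_rev_map (f : nat -> nat) N i : i < N ->
  nth 0 (rev [seq f m | m <- iota 0 N]) i = f (N - 1 - i).
Proof.
move=> lt; rewrite nth_rev size_map size_iota // nth_map_iota; last lia.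
congr f; lia.
Qed.

Definition P1b2 k i := if i < k then 2 * (k - 1 - i) else 2 * k + 2 * (i - k).
Definition P2b2 k i := if i < k then 2 * i + 1 else 2 * k + 1 + 2 * (2 * k - 1 - i).

Lemma b2_eq h : 0 < h -> perm_b2 (2 * (2 * (2 * h))) =1
  cyc (mkseq (P1b2 (2 * h)) (2 * (2 * h))) \o cyc (mkseq (P2b2 (2 * h)) (2 * (2 * h))).
Proof.
move=> h0 n; rewrite /perm_b2 /cycles /=.
have -> : 2 * (2 * (2 * h)) %/ 4 = 2 * h by lia.
have -> : 2 * (2 * (2 * h)) %/ 2 = 2 * (2 * h) by lia.
congr (cyc _ (cyc _ n)).
- apply: (@eq_from_nth _ 0).
    by rewrite size_mkseq size_cat size_rev !size_map size_iota; lia.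
  move=> i; rewrite size_cat size_rev !size_map size_iota => lt.
  rewrite nth_mkseq; last lia.
  rewrite nth_cat size_rev size_map size_iota /P1b2.
  case: ifP => h1; first by rewrite nth_rev_map //; lia.
  rewrite nth_map_iota; lia.
- apply: (@eq_from_nth _ 0).
    by rewrite size_mkseq size_cat size_rev !size_map size_iota; lia.
  move=> i; rewrite size_cat size_rev !size_map size_iota => lt.
  rewrite nth_mkseq; last lia.
  rewrite nth_cat size_map size_iota /P2b2.
  case: ifP => h1; first by rewrite nth_map_iota.
  rewrite nth_rev_map; lia.
Qed.

Lemma b2_bound h i : 1 < h -> i < 2 * (2 * h) ->
  P1b2 (2 * h) i < 2 * (2 * (2 * h)) /\ P2b2 (2 * h) i < 2 * (2 * (2 * h)).
Proof. move=> h1 li; rewrite /P1b2 /P2b2 /=; split; split_ev. Qed.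

Lemma b2_uniq h : 1 < h ->
  uniq (mkseq (P1b2 (2 * h)) (2 * (2 * h)) ++ mkseq (P2b2 (2 * h)) (2 * (2 * h))).
Proof.
move=> h1; apply: uniq_cover => [i li|n ln]; first exact: b2_bound.
rewrite /P1b2 /P2b2.
case: (boolP (odd n)) => on.
- case: (ltnP n (4 * h)) => r1.
    by right; exists n./2; [lia | split_ev].
  by right; exists (6 * h - 1 - n./2); [lia | split_ev].
- case: (ltnP n (4 * h)) => r1.
    by left; exists (2 * h - 1 - n./2); [lia | split_ev].
  by left; exists n./2; [lia | split_ev].
Qed.

Lemma b2_a h i : 1 < h -> i < 2 * (2 * h) ->
  af (2 * h) (P1b2 (2 * h) i) =
  P2b2 (2 * h) ((2 * h - 1 + (2 * (2 * h) - 1) * i) %% (2 * (2 * h))).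
Proof.
move=> h1 li.
have [S [hS lS]] : exists S, (2 * h - 1 + (2 * (2 * h) - 1) * i) %% (2 * (2 * h)) = S /\
    ((i < 2 * h /\ S = 2 * h - 1 - i) \/ (2 * h <= i /\ S = 6 * h - 1 - i)).
  case: (ltnP i (2 * h)) => hi.
    exists (2 * h - 1 - i); split; last lia.
    by rewrite (@modL _ (2 * h - 1 - i) _ i) ?modn_small //; nia.
  exists (6 * h - 1 - i); split; last lia.
  by rewrite (@modL _ (6 * h - 1 - i) _ (i - 1)) ?modn_small //; nia.
rewrite hS /P1b2 /P2b2 /=.
clear hS.
case: lS => [[e1 e2]|[e1 e2]]; subst; split_ev.
Qed.


Definition P1b3 k := Pshape2 (fun i => 2 * i) (fun i => 2 * i + 2 * k + 1)
  (fun j => k + 2 * j + 2) (fun j => 3 * k + 2 * j + 2) (k %/ 2) (k + 1) (3 * k).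
Definition P2b3 k := Pshape2 (fun j => 3 * k - 2 - 2 * j) (fun j => 2 * k - 1 - 2 * j)
  (fun i => 4 * k - 1 - 2 * i) (fun i => k - 1 - 2 * i) (k %/ 2 - 1) (2 * k) k.

Lemma b3_eq h : 0 < h -> perm_b3 (2 * (2 * (2 * h))) =1
  cyc (mkseq (P1b3 (2 * h)) (2 * (2 * h))) \o cyc (mkseq (P2b3 (2 * h)) (2 * (2 * h))).
Proof.
move=> h0 n; rewrite /perm_b3 /cycles /=.
have -> : 2 * (2 * (2 * h)) %/ 4 = 2 * h by lia.
rewrite /cycle_D1 /cycle_D2 !shape2_eq.
congr (cyc (mkseq _ _) (cyc (mkseq _ _) n)); lia.
Qed.

Lemma b3_bound h i : 1 < h -> i < 2 * (2 * h) ->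
  P1b3 (2 * h) i < 2 * (2 * (2 * h)) /\ P2b3 (2 * h) i < 2 * (2 * (2 * h)).
Proof.
move=> h1 li; have e2 : 2 * h %/ 2 = h by lia.
rewrite /P1b3 /P2b3 /Pshape2 /= e2; split; split_ev.
Qed.

Lemma b3_cover h n : 1 < h -> n < 2 * (2 * (2 * h)) ->
  (exists2 i, i < 2 * (2 * h) & P1b3 (2 * h) i = n) \/
  (exists2 i, i < 2 * (2 * h) & P2b3 (2 * h) i = n).
Proof.
move=> h1 ln.
have e2 : 2 * h %/ 2 = h by lia.
rewrite /P1b3 /P2b3 /Pshape2 /= e2.
case: (boolP (odd n)) => on.
- case: (ltnP n (2 * h)) => r1.
    by right; exists (4 * h - n); [lia | split_ev].
  case: (ltnP n (2 * h + 2)) => r2.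
    by left; exists (2 * h); [lia | split_ev].
  case: (ltnP n (4 * h)) => r3.
    by right; exists (4 * h - n); [lia | split_ev].
  case: (ltnP n (6 * h)) => r4.
    by left; exists (n - 4 * h); [lia | split_ev].
  by right; exists (10 * h - 1 - n); [lia | split_ev].
- case: (ltnP n (2 * h)) => r1.
    by left; exists n; [lia | split_ev].
  case: (ltnP n (2 * h + 1)) => r2.
    by right; exists (2 * h - 1); [lia | split_ev].
  case: (ltnP n (4 * h)) => r3.
    by left; exists n; [lia | split_ev].
  case: (ltnP n (4 * h + 1)) => r4.
    by right; exists (2 * h - 2); [lia | split_ev].
  case: (ltnP n (6 * h)) => r5.
    by right; exists (6 * h - 2 - n); [lia | split_ev].
  case: (ltnP n (6 * h + 1)) => r6.
    by left; exists (2 * h + 1); [lia | split_ev].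
  by left; exists (n - 4 * h + 1); [lia | split_ev].
Qed.

Lemma b3_uniq h : 1 < h ->
  uniq (mkseq (P1b3 (2 * h)) (2 * (2 * h)) ++ mkseq (P2b3 (2 * h)) (2 * (2 * h))).
Proof.
move=> h1; apply: uniq_cover => [i li|n ln]; first exact: b3_bound.
exact: b3_cover.
Qed.

Lemma b3_a h i : 1 < h -> i < 2 * (2 * h) ->
  af (2 * h) (P1b3 (2 * h) i) =
  P2b3 (2 * h) ((2 * (2 * h) - 1 + (2 * h - 1) * i) %% (2 * (2 * h))).
Proof.
move=> h1 li.
have [t ht] : exists t, i = 2 * t \/ i = 2 * t + 1 by exists i./2; lia.
have [S [hS lS]] : exists S, (2 * (2 * h) - 1 + (2 * h - 1) * i) %% (2 * (2 * h)) = S /\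
    ((i = 2 * t /\ S = 4 * h - 1 - i) \/ (i = 2 * t + 1 /\ i < 2 * h /\ S = 2 * h - 1 - i) \/
     (i = 2 * t + 1 /\ 2 * h <= i /\ S = 6 * h - 1 - i)).
  case: ht => ht.
    exists (4 * h - 1 - i); split; last lia.
    by rewrite (@modL _ (4 * h - 1 - i) _ t) ?modn_small //; subst; nia.
  case: (ltnP i (2 * h)) => hi.
    exists (2 * h - 1 - i); split; last lia.
    by rewrite (@modL _ (2 * h - 1 - i) _ (t + 1)) ?modn_small //; subst; nia.
  exists (6 * h - 1 - i); split; last lia.
  rewrite (@modL _ (6 * h - 1 - i) _ t) ?modn_small //; subst; nia.
rewrite hS /P1b3 /P2b3 /Pshape2 /=.
have -> : 2 * h %/ 2 = h by lia.
clear hS ht.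
case: lS => [[e1 e2]|[[e1 [e2 e3]]|[e1 [e2 e3]]]]; subst; split_ev.
Qed.


Lemma pack (P1 P2 : nat -> nat) L (b a : nat -> nat) m c1 c2 w u u' :
  0 < L -> uniq (mkseq P1 L ++ mkseq P2 L) ->
  (forall i, i < L -> P1 i < 2 * L /\ P2 i < 2 * L) ->
  (forall n, b n = bf P1 P2 L n) ->
  (forall i, i < L -> a (P1 i) = P2 ((c1 + m * i) %% L)) ->
  (forall n, a (a n) = n) -> (forall n, 2 * L <= n -> a n = n) ->
  m * m = 1 + L * w -> c2 + m * c1 = L * u -> c1 + m * c2 = L * u' ->
  [/\ forall n, a (b (a n)) = iter m b n, forall n, iter L b n = n &
      forall t, 0 < t < L -> exists2 n, n < 2 * L & iter t b n != n].
Proof.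
move=> L0 U Bd Hb Ha1 Haa Hao Hm Hc Hc'.
have eb := eq_iter Hb.
split.
- move=> n; rewrite Hb eb.
  exact: (relation L0 U Bd Ha1 Haa Hao Hm Hc Hc').
- by move=> n; rewrite eb (iterL L0 U Bd).
- move=> t tL; exists (P1 0); first by case: (Bd 0 L0).
  by rewrite eb (iter_ne L0 U).
Qed.

Lemma aE h n : perm_a (2 * (2 * (2 * h))) n = af (2 * h) n.
Proof. by rewrite perm_aE. Qed.

Lemma a_inv h n : perm_a (2 * (2 * (2 * h))) (perm_a (2 * (2 * (2 * h))) n) = n.
Proof.
rewrite !aE; have [v hv] : exists v, af (2 * h) n = v by eexists.
rewrite hv; move: hv; rewrite /af; repeat case: ifP => ?; lia.
Qed.

Lemma a_out h n : 2 * (2 * (2 * h)) <= n -> perm_a (2 * (2 * (2 * h))) n = n.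
Proof. by move=> ge; rewrite aE /af ltnNge ge. Qed.

Definition facts (b a : nat -> nat) m L :=
  [/\ forall n, a (b (a n)) = iter m b n, forall n, iter L b n = n &
      forall t, 0 < t < L -> exists2 n, n < 2 * L & iter t b n != n].

Lemma b1_facts h : 1 < h ->
  facts (perm_b1 (2 * (2 * (2 * h)))) (perm_a (2 * (2 * (2 * h)))) (2 * h + 1) (2 * (2 * h)).
Proof.
move=> h1.
apply: (@pack (P1b1 (2 * h)) (P2b1 (2 * h)) _ _ _ _ 0 0 (h + 1) 0 0).
- lia.
- exact: b1_uniq.
- by move=> i li; apply: b1_bound.
- move=> n; rewrite /perm_b1 /cycles /= /bf.
  have -> : 2 * (2 * (2 * h)) %/ 4 = 2 * h by lia.
  by rewrite C1b1 ?C2b1 //; lia.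
- by move=> i li; rewrite aE b1_a.
- exact: a_inv.
- by move=> n; apply: a_out.
- nia.
- lia.
- lia.
Qed.

Lemma b2_facts h : 1 < h ->
  facts (perm_b2 (2 * (2 * (2 * h)))) (perm_a (2 * (2 * (2 * h)))) (2 * (2 * h) - 1) (2 * (2 * h)).
Proof.
move=> h1.
apply: (@pack (P1b2 (2 * h)) (P2b2 (2 * h)) _ _ _ _ (2 * h - 1) (2 * h - 1)
   (2 * (2 * h) - 2) (2 * h - 1) (2 * h - 1)).
- lia.
- exact: b2_uniq.
- by move=> i li; apply: b2_bound.
- by move=> n; rewrite b2_eq //; lia.
- by move=> i li; rewrite aE b2_a.
- exact: a_inv.
- by move=> n; apply: a_out.
- nia.
- nia.
- nia.
Qed.

Lemma b3_facts h : 1 < h ->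
  facts (perm_b3 (2 * (2 * (2 * h)))) (perm_a (2 * (2 * (2 * h)))) (2 * h - 1) (2 * (2 * h)).
Proof.
move=> h1.
apply: (@pack (P1b3 (2 * h)) (P2b3 (2 * h)) _ _ _ _ (2 * (2 * h) - 1) (2 * h - 1)
   (h - 1) (2 * h - 1) h).
- lia.
- exact: b3_uniq.
- by move=> i li; apply: b3_bound.
- by move=> n; rewrite b3_eq //; lia.
- by move=> i li; rewrite aE b3_a.
- exact: a_inv.
- by move=> n; apply: a_out.
- nia.
- nia.
- nia.
Qed.


Lemma divmodE l z w : 0 < l -> w < l -> (z * l + w) %/ l = z /\ (z * l + w) %% l = w.
Proof. move=> l0 wl; rewrite divnMDl // divn_small // addn0 modnMDl modn_small //. Qed.

Lemma in_block l n y : 0 < l -> n \in iota (y * l) l -> n %/ l = y.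
Proof.
move=> l0; rewrite mem_iota => /andP [a b].
have -> : n = y * l + (n - y * l) by lia.
by case: (@divmodE l y (n - y * l)) => //; lia.
Qed.

Lemma alphaE l t n : 0 < l -> n < t * l ->
  cycles [seq iota (i * l) l | i <- iota 0 t] n = n %/ l * l + (n %% l).+1 %% l.
Proof.
move=> l0 lt.
have nl : n %/ l < t by rewrite ltn_divLR.
have ml : n %% l < l by rewrite ltn_mod.
have en : n = nth 0 (iota (n %/ l * l) l) (n %% l) by rewrite nth_iota // -divn_eq.
have cy : cyc (iota (n %/ l * l) l) n = n %/ l * l + (n %% l).+1 %% l.
  transitivity (cyc (iota (n %/ l * l) l) (nth 0 (iota (n %/ l * l) l) (n %% l))); first by rewrite -en.
  by rewrite cyc_nth ?iota_uniq ?size_iota // nth_iota // ltn_mod.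
rewrite (@cycles_one (fun i => iota (i * l) l) t (n %/ l) n) //.
- by rewrite mem_iota {1}(divn_eq n l); lia.
- move=> y yt ne; rewrite cy; split; apply/negP => /(in_block l0).
  + by move=> e; rewrite e eqxx in ne.
  + case: (@divmodE l (n %/ l) ((n %% l).+1 %% l)) => //; first by rewrite ltn_mod.
    by move=> -> _ e; rewrite e eqxx in ne.
Qed.

Lemma alpha_out l t n : t * l <= n -> cycles [seq iota (i * l) l | i <- iota 0 t] n = n.
Proof.
move=> ge; apply: cycles_out => C /mapP [i]; rewrite mem_iota => /andP [_ it] ->.
rewrite mem_iota; apply/negP => /andP [_ b].
have : i.+1 * l <= t * l by apply: leq_mul => //; rewrite add0n in it.
rewrite mulSn; lia.
Qed.

Definition bl l t j := [seq j + m * l | m <- iota 0 t].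

Lemma bl_mod l t j x : 0 < l -> j < l -> x \in bl l t j -> x %% l = j.
Proof.
move=> l0 jl /mapP [m _ ->]; rewrite addnC.
by case: (@divmodE l m j).
Qed.

Lemma betaE l t n : 0 < l -> n < t * l ->
  cycles [seq bl l t j | j <- iota 0 l] n = n %% l + (n %/ l).+1 %% t * l.
Proof.
move=> l0 lt.
have nl : n %/ l < t by rewrite ltn_divLR.
have t0 : 0 < t by lia.
have ml : n %% l < l by rewrite ltn_mod.
have ub : uniq (bl l t (n %% l)).
  rewrite map_inj_uniq ?iota_uniq // => a b /eqP; rewrite eqn_add2l eqn_mul2r.
  by case/orP => [/eqP l00|/eqP]; [lia|].
have en : n = nth 0 (bl l t (n %% l)) (n %/ l).
  by rewrite /bl (nth_map 0) ?size_iota // nth_iota // add0n addnC -divn_eq.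
have cy : cyc (bl l t (n %% l)) n = n %% l + (n %/ l).+1 %% t * l.
  transitivity (cyc (bl l t (n %% l)) (nth 0 (bl l t (n %% l)) (n %/ l))); first by rewrite -en.
  rewrite cyc_nth // /bl size_map size_iota // (nth_map 0) ?size_iota ?ltn_mod //.
  by rewrite nth_iota ?ltn_mod.
have inb : cyc (bl l t (n %% l)) n \in bl l t (n %% l).
  by rewrite cy; apply/mapP; exists ((n %/ l).+1 %% t); rewrite // mem_iota ltn_mod t0.
rewrite (@cycles_one (bl l t) l (n %% l) n) //.
- by rewrite {1}en mem_nth // size_map size_iota.
- move=> y yl ne; split; apply/negP => /(bl_mod l0 yl) e.
  + by rewrite e eqxx in ne.
  + by rewrite (bl_mod l0 ml inb) in e; rewrite e eqxx in ne.
Qed.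

Lemma beta_out l t n : t * l <= n -> cycles [seq bl l t j | j <- iota 0 l] n = n.
Proof.
move=> ge; apply: cycles_out => C /mapP [j]; rewrite mem_iota => /andP [_ jl] ->.
apply/negP => /mapP [m]; rewrite mem_iota => /andP [_ mt] e.
have : m.+1 * l <= t * l by apply: leq_mul => //; rewrite add0n in mt.
rewrite mulSn; rewrite add0n in jl; lia.
Qed.

Lemma alpha_beta_comm l t n : 0 < l ->
  cycles [seq iota (i * l) l | i <- iota 0 t] (cycles [seq bl l t j | j <- iota 0 l] n) =
  cycles [seq bl l t j | j <- iota 0 l] (cycles [seq iota (i * l) l | i <- iota 0 t] n).
Proof.
move=> l0; case: (ltnP n (t * l)) => [lt | ge]; last by rewrite alpha_out ?beta_out ?alpha_out.
have nl : n %/ l < t by rewrite ltn_divLR.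
have t0 : 0 < t by lia.
have ml : n %% l < l by rewrite ltn_mod.
have m1 : (n %% l).+1 %% l < l by rewrite ltn_mod.
have m2 : (n %/ l).+1 %% t < t by rewrite ltn_mod.
have b1 : n %% l + (n %/ l).+1 %% t * l < t * l.
  have : ((n %/ l).+1 %% t).+1 * l <= t * l by apply: leq_mul.
  rewrite mulSn; lia.
have a1 : n %/ l * l + (n %% l).+1 %% l < t * l.
  have : (n %/ l).+1 * l <= t * l by apply: leq_mul.
  rewrite mulSn; lia.
rewrite betaE // alphaE // alphaE // betaE //.
rewrite [n %% l + _]addnC.
case: (@divmodE l ((n %/ l).+1 %% t) (n %% l)) => // -> ->.
case: (@divmodE l (n %/ l) ((n %% l).+1 %% l)) => // -> ->.
by rewrite addnC.
Qed.

Lemma iter_comm (f g : nat -> nat) : (forall n, f (g n) = g (f n)) ->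
  forall a b n, iter a f (iter b g n) = iter b g (iter a f n).
Proof.
move=> H a b; elim: a => [//|a IH] n.
rewrite !iterS IH; elim: b {IH} (iter a f n) => //= b IH m.
by rewrite H IH.
Qed.

Lemma iter_comm2 (f g : nat -> nat) : (forall n, f (g n) = g (f n)) ->
  forall u v u' v' n, iter u f (iter v g (iter u' f (iter v' g n))) =
                      iter u' f (iter v' g (iter u f (iter v g n))).
Proof.
move=> H u v u' v' n.
rewrite -(iter_comm H u' v) -(iter_comm H u v') -!iterD.
by rewrite addnC [v' + v]addnC.
Qed.

Lemma Klein_comm q l u v u' v' n : 0 < l ->
  Klein_elt q l u v (Klein_elt q l u' v' n) = Klein_elt q l u' v' (Klein_elt q l u v n).
Proof.
move=> l0; rewrite /Klein_elt; apply: iter_comm2 => m.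
exact: (@alpha_beta_comm l (q %/ l) m l0).
Qed.

Module GroupPart.
Local Open Scope group_scope.

Section Grp.
Variables (gT : finGroupType) (A B : gT) (m L : nat).
Hypothesis HA : A * A = 1.
Hypothesis Hrel : A * B * A = B ^+ m.
Hypothesis HL : B ^+ L = 1.
Hypothesis HL0 : 0 < L.

Lemma AinvE : A^-1 = A.
Proof. by apply/eqP; rewrite eq_invg_mul HA. Qed.

Lemma ABm : A * B = B ^+ m * A.
Proof. by rewrite -Hrel -mulgA HA mulg1. Qed.

Lemma ABu u : A * B ^+ u = B ^+ (m * u) * A.
Proof.
elim: u => [|u IH]; first by rewrite muln0 !expg0 mulg1 mul1g.
by rewrite expgSr mulgA IH -mulgA ABm mulgA -expgD mulnS addnC.
Qed.

Lemma BinvE w : (B ^+ w)^-1 = B ^+ (w * (L - 1)).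
Proof.
apply/eqP; rewrite eq_invg_mul -expgD.
have -> : (w + w * (L - 1) = L * w)%N by nia.
by rewrite expgM HL expg1n.
Qed.

Definition form x := exists u (v : bool), x = B ^+ u * (if v then A else 1).

Lemma form_mulV x y : form x -> form y -> form (x * y^-1).
Proof.
move=> [u [v ->]] [w [z ->]].
rewrite invMg BinvE.
have -> : (if z then A else 1)^-1 = if z then A else 1 by case: z; rewrite ?AinvE ?invg1.
set s := (w * (L - 1))%N.
case: v; case: z => /=.
- by exists (u + s)%N, false; rewrite mulg1 -mulgA (mulgA A A) HA mul1g expgD.
- by exists (u + m * s)%N, true; rewrite mul1g -mulgA ABu mulgA expgD.
- by exists (u + m * s)%N, true; rewrite mulg1 ABu mulgA expgD.
- by exists (u + s)%N, false; rewrite !mulg1 mul1g expgD.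
Qed.

Lemma comm_ex t e : A * B ^+ t = B ^+ t * A -> (m * t = t + e)%N -> B ^+ e = 1.
Proof.
move=> H ht; move: H; rewrite ABu ht expgD => /mulIg.
by rewrite -{2}(mulg1 (B ^+ t)) => /mulgI.
Qed.


Lemma comm_ex2 t e z : A * B ^+ t = B ^+ t * A -> (m * t = t + e + L * z)%N -> B ^+ e = 1.
Proof.
move=> H ht; move: H; rewrite ABu ht !expgD expgM HL expg1n mulg1 => /mulIg.
by rewrite -{2}(mulg1 (B ^+ t)) => /mulgI.
Qed.

Lemma comm_A t z : (m * t = t + L * z)%N -> A * B ^+ t = B ^+ t * A.
Proof. by move=> e; rewrite ABu e expgD expgM HL expg1n mulg1. Qed.

Lemma sq_B u : (B ^+ u * 1) ^+ 2 = B ^+ (u + u).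
Proof. by rewrite mulg1 expgS expg1 expgD. Qed.

Lemma sq_BA u : (B ^+ u * A) ^+ 2 = B ^+ (u + m * u).
Proof. by rewrite expgS expg1 mulgA -(mulgA _ A) ABu mulgA -mulgA HA mulg1 expgD. Qed.

Lemma G1_prop h x y : m = (2 * h + 1)%N -> L = (4 * h)%N -> form x -> form y ->
  x ^+ 2 * y = y * x ^+ 2.
Proof.
move=> em eL [u [v ->]] [w [z ->]].
have [s [hs es]] : exists s, (B ^+ u * (if v then A else 1)) ^+ 2 = B ^+ (2 * s) /\ True.
  case: v; [exists (u * (h + 1))%N | exists u]; split => //.
    by rewrite sq_BA; congr (B ^+ _); rewrite em; nia.
  by rewrite sq_B; congr (B ^+ _); lia.
rewrite hs; case: z.
- rewrite mulgA -expgD -mulgA (@comm_A (2 * s) s); last by rewrite em eL; nia.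
  by rewrite mulgA -expgD addnC.
- by rewrite !mulg1 -!expgD addnC.
Qed.

Lemma G2_prop x y : m = (L - 1)%N -> form x -> form y ->
  x ^+ 2 = 1 \/ y ^+ 2 = 1 \/ commute x y.
Proof.
move=> em [u [v ->]] [w [z ->]].
have sq1 t : (B ^+ t * A) ^+ 2 = 1.
  rewrite sq_BA (_ : (t + m * t = L * t)%N); first by rewrite expgM HL expg1n.
  rewrite em; nia.
case: v; first by left.
case: z; first by right; left.
by right; right; rewrite !mulg1; apply: commuteX2.
Qed.

End Grp.


Section Rep.
Variables (q : nat) (F : finFieldType) (c : 'I_q -> F) (d : F -> 'I_q).
Hypotheses (cK : cancel c d) (dK : cancel d c).
Local Notation rep := (represents d).

Lemma rep_uniq g h P : rep g P -> rep h P -> g = h.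
Proof.
move=> Hg Hh; apply/permP => x; apply: (can_inj dK); apply: val_inj.
by rewrite /= Hg Hh.
Qed.

Lemma rep_ext g P P' : rep g P -> (forall n, P n = P' n) -> rep g P'.
Proof. by move=> H e x; rewrite H e. Qed.

Lemma rep_mul g h P Q : rep g P -> rep h Q -> rep (g * h) (fun n => Q (P n)).
Proof. by move=> Hg Hh x; rewrite permM Hh Hg. Qed.

Lemma rep1 : rep 1 id.
Proof. by move=> x; rewrite perm1. Qed.

Lemma rep_exp g P n : rep g P -> rep (g ^+ n) (iter n P).
Proof.
move=> H; elim: n => [|n IH]; first exact: rep1.
by rewrite expgSr; apply: rep_mul.
Qed.

Lemma rep_ne1 g P n : rep g P -> n < q -> P n != n -> g != 1.
Proof.
move=> H lt ne; apply/eqP => e; move: (H (c (Ordinal lt))).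
by rewrite e perm1 cK /= => /esym /eqP; rewrite (negbTE ne).
Qed.

Lemma tuple_uniq f (be be' : 'I_q -> {perm F}) : is_LPP f ->
  Defs.tuple_of c f be -> Defs.tuple_of c f be' -> forall i, be i = be' i.
Proof.
move=> [_ Hx] Hb Hb' i; apply/permP => x.
by apply: (bij_inj (Hx x)); rewrite Hb Hb'.
Qed.

Lemma equiv_unpack f g be ga : is_LPP f -> is_LPP g ->
  Defs.tuple_of c f be -> Defs.tuple_of c g ga -> LPP_equiv c f g ->
  exists sg la : {perm F}, forall i, ga i = la * be i * sg.
Proof.
move=> Lf Lg Tf Tg [be' [ga' [sg [la [Tf' Tg' H]]]]].
exists sg, la => i; apply/permP => x.
by rewrite !permM (tuple_uniq Lg Tg Tg') H (tuple_uniq Lf Tf Tf').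
Qed.

Record Gdata (be : 'I_q -> {perm F}) (A B : {perm F}) (m L : nat) : Prop := GD {
  gd_form : forall i, form A B (be i);
  gd_A : exists i, be i = A;
  gd_B : exists i, be i = B;
  gd_AB : exists i, be i = A * B;
  gd_1 : exists i, be i = 1;
  gd_AA : A * A = 1;
  gd_rel : A * B * A = B ^+ m;
  gd_L : B ^+ L = 1;
  gd_ne : forall t, 0 < t < L -> B ^+ t != 1 }.

Lemma Gs_data b f m L : q = (2 * L)%N -> 1 < L ->
  (forall n, perm_a q (perm_a q n) = n) ->
  (forall n, perm_a q (b (perm_a q n)) = iter m b n) ->
  (forall n, iter L b n = n) ->
  (forall t, 0 < t < L -> exists2 n, n < 2 * L & iter t b n != n) ->
  is_Gs_poly c d b f ->
  exists be A B, [/\ is_LPP f, Defs.tuple_of c f be & Gdata be A B m L].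
Proof.
move=> eq L1 Haa Hrel HL Hne [Lf [be [Tf [Hall Hsurj]]]].
have q2 : q %/ 2 = L by rewrite eq mulKn.
have [ia Ha] := Hsurj 0%N 1%N ltac:(lia) ltac:(lia).
have [ib Hb] := Hsurj 1%N 0%N ltac:(lia) ltac:(lia).
have [iab Hab] := Hsurj 1%N 1%N ltac:(lia) ltac:(lia).
have [i1 H1] := Hsurj 0%N 0%N ltac:(lia) ltac:(lia).
set A := be ia; set B := be ib.
have rA : rep A (perm_a q) by apply: rep_ext Ha _.
have rB : rep B b by apply: rep_ext Hb _.
have AA : A * A = 1.
  apply: (rep_uniq (rep_mul rA rA)); apply: rep_ext rep1 _ => n; by rewrite Haa.
have rel : A * B * A = B ^+ m.
  apply: (rep_uniq (rep_mul (rep_mul rA rB) rA)).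
  by apply: rep_ext (rep_exp m rB) _ => n; rewrite Hrel.
have BL : B ^+ L = 1.
  apply: (rep_uniq (rep_exp L rB)); by apply: rep_ext rep1 _ => n; rewrite HL.
have L0 : 0 < L by lia.
exists be, A, B; split => //; split => //.
- move=> i; have [u [v [lu lv Hi]]] := Hall i.
  have rBu := rep_exp u rB; have rAv := rep_exp v rA.
  have -> : be i = A ^+ v * B ^+ u by apply: (rep_uniq Hi); exact: rep_mul rAv rBu.
  case: v lv {Hi rAv} => [|[|v]] lv //.
  + by exists u, false; rewrite expg0 mul1g mulg1.
  + by exists (m * u)%N, true; rewrite expg1 (ABu AA rel).
- by exists ia.
- by exists ib.
- exists iab; apply: (rep_uniq Hab); exact: rep_mul rA rB.
- exists i1; apply: (rep_uniq H1); exact: rep1.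
- move=> t tL; have [n ln ne] := Hne t tL.
  by apply: (rep_ne1 (rep_exp t rB)) ne; rewrite eq.
Qed.
End Rep.


Section Main.
Variables (q : nat) (F : finFieldType) (c : 'I_q -> F) (d : F -> 'I_q).
Hypotheses (cK : cancel c d) (dK : cancel d c).

Lemma conj_key (be ga : 'I_q -> {perm F}) (sg la : {perm F}) i0 :
  (forall i, ga i = la * be i * sg) -> be i0 = 1 ->
  forall i, be i = (ga i * (ga i0)^-1) ^ la.
Proof.
move=> H H0 i; rewrite conjgE !H H0 mulg1 invMg.
by rewrite !mulgA mulVg mul1g mulgK mulgKV.
Qed.

Lemma conj_key2 (be ga : 'I_q -> {perm F}) (sg la : {perm F}) j0 :
  (forall i, ga i = la * be i * sg) -> ga j0 = 1 ->
  forall i, ga i = (be i * (be j0)^-1) ^ la^-1.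
Proof.
move=> H H0 i; have e : sg = (la * be j0)^-1.
  by apply/eqP; rewrite eq_sym eq_invg_mul -H H0.
by rewrite conjgE invgK H e invMg !mulgA.
Qed.

Lemma no_equiv_K (be ga : 'I_q -> {perm F}) (A B sg la : {perm F}) m L e :
  Gdata be A B m L -> (forall i j, commute (ga i) (ga j)) ->
  (forall i, ga i = la * be i * sg) -> (m = 1 + e)%N -> 0 < e < L -> False.
Proof.
move=> D C H em el.
have [i0 H0] := gd_1 D.
have K := conj_key H H0.
have [ia Ha] := gd_A D; have [ib Hb] := gd_B D.
have cAB : commute A B.
  rewrite -Ha -Hb !K /commute -!conjMg; congr (_ ^ _).
  apply: commuteM.
  - apply: commute_sym; apply: commuteM; [exact: C | apply: commuteV; exact: C].
  - apply: commuteV; apply: commute_sym; apply: commuteM; [exact: C | apply: commuteV; exact: C].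
have := comm_ex (gd_AA D) (gd_rel D) (t := 1) (e := e).
rewrite !expg1 => /(_ cAB) E.
have E' : B ^+ e = 1 by apply: E; rewrite em muln1.
by move: (gd_ne D el); rewrite E' eqxx.
Qed.

Lemma no_equiv_G1 (be ga : 'I_q -> {perm F}) (A B A' B' sg la : {perm F}) h L' m' e z :
  0 < h -> Gdata be A B (2 * h + 1) (4 * h) -> Gdata ga A' B' m' L' ->
  (forall i, ga i = la * be i * sg) -> (m' * 2 = 2 + e + L' * z)%N -> 0 < e < L' -> False.
Proof.
move=> h0 Db Dg H em el.
have [j0 H0] := gd_1 Dg.
have K := conj_key2 H H0.
have [ia Ha] := gd_A Dg; have [ib Hb] := gd_B Dg.
have L0 : 0 < 4 * h by lia.
have fm := form_mulV (gd_AA Db) (gd_rel Db) (gd_L Db) L0.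
have P := G1_prop (gd_AA Db) (gd_rel Db) (gd_L Db) L0 (erefl _) (erefl _)
   (fm _ _ (gd_form Db ib) (gd_form Db j0)) (fm _ _ (gd_form Db ia) (gd_form Db j0)).
have cAB : A' * B' ^+ 2 = B' ^+ 2 * A'.
  by rewrite -Ha -Hb !K -conjXg -!conjMg P.
have E := comm_ex2 (gd_AA Dg) (gd_rel Dg) (gd_L Dg) cAB em.
by move: (gd_ne Dg el); rewrite E eqxx.
Qed.

Lemma no_equiv_G2 (be ga : 'I_q -> {perm F}) (A B A' B' sg la : {perm F}) L m' e :
  0 < L -> Gdata be A B (L - 1) L -> Gdata ga A' B' m' L ->
  (forall i, ga i = la * be i * sg) -> (m'.+1 < L)%N -> 2 < L -> (m' = 1 + e)%N -> 0 < e < L -> False.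
Proof.
move=> L0 Db Dg H m1 L2 em el.
have [j0 H0] := gd_1 Dg.
have K := conj_key2 H H0.
have [iab Hab] := gd_AB Dg; have [ib Hb] := gd_B Dg.
have fm := form_mulV (gd_AA Db) (gd_rel Db) (gd_L Db) L0.
have P := G2_prop (gd_AA Db) (gd_rel Db) (gd_L Db) L0 (erefl _)
   (fm _ _ (gd_form Db iab) (gd_form Db j0)) (fm _ _ (gd_form Db ib) (gd_form Db j0)).
have P' : (ga iab) ^+ 2 = 1 \/ (ga ib) ^+ 2 = 1 \/ commute (ga iab) (ga ib).
  rewrite !K -!conjXg.
  case: P => [->|[->|Cxy]]; first by left; exact: conj1g.
    by right; left; exact: conj1g.
  by right; right; rewrite /commute -!conjMg Cxy.
rewrite Hab Hb in P'.
have sq : (A' * B') ^+ 2 = B' ^+ m'.+1.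
  by rewrite expgS expg1 mulgA (gd_rel Dg) expgSr.
case: P' => [|[|Cx]].
- by rewrite sq => E; move: (gd_ne Dg (t := m'.+1)); rewrite E eqxx => /(_ m1).
- by move=> E; move: (gd_ne Dg (t := 2)); rewrite E eqxx => /(_ L2).
- have cAB : A' * B' ^+ 1 = B' ^+ 1 * A'.
    rewrite !expg1; apply: (mulIg B'); move: Cx; rewrite /commute !mulgA => ->.
    done.
  have E := comm_ex (gd_AA Dg) (gd_rel Dg) cAB (e := e) ltac:(by rewrite em muln1).
  by move: (gd_ne Dg el); rewrite E eqxx.
Qed.

Lemma Klein_data e g : is_eKlenian c d e g ->
  exists ga : 'I_q -> {perm F},
    [/\ is_LPP g, Defs.tuple_of c g ga & forall i j, commute (ga i) (ga j)].
Proof.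
move=> [Lg [ga [Tg [Hall _]]]]; exists ga; split => // i j.
have [u [v [_ _ Ri]]] := Hall i.
have [u' [v' [_ _ Rj]]] := Hall j.
have l0 : 0 < 2 ^ e by rewrite expn_gt0.
apply: (rep_uniq dK (rep_mul Ri Rj)).
apply: rep_ext (rep_mul Rj Ri) _ => n.
exact: Klein_comm.
Qed.
End Main.

End GroupPart.
Import GroupPart.

Theorem theorem3p5 (r : nat) (F : finFieldType)
    (c : 'I_(2 ^ r) -> F) (d : F -> 'I_(2 ^ r))
    (cK : cancel c d) (dK : cancel d c)
    (f1 f2 f3 : F -> F -> F) :
  4 <= r ->
  is_Gs_poly c d (perm_b1 (2 ^ r)) f1 ->
  is_Gs_poly c d (perm_b2 (2 ^ r)) f2 ->
  is_Gs_poly c d (perm_b3 (2 ^ r)) f3 ->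
  (forall e, e < r -> forall g, is_eKlenian c d e g ->
     [/\ ~ LPP_equiv c f1 g, ~ LPP_equiv c f2 g & ~ LPP_equiv c f3 g])
  /\ [/\ ~ LPP_equiv c f1 f2, ~ LPP_equiv c f1 f3 & ~ LPP_equiv c f2 f3].
Proof.
move=> r4 Hf1 Hf2 Hf3.
set h := 2 ^ (r - 3).
have h1 : 1 < h.
  have : 2 ^ 1 <= 2 ^ (r - 3) by rewrite leq_exp2l //; lia.
  by rewrite expn1.
have eqq : 2 ^ r = 2 * (2 * (2 * h)).
  by rewrite /h -!expnS; congr (2 ^ _); lia.
have qL : 2 ^ r = 2 * (2 * (2 * h)) by [].
have L1 : 1 < 2 * (2 * h) by lia.
have Haa : forall n, perm_a (2 ^ r) (perm_a (2 ^ r) n) = n by move=> n; rewrite eqq a_inv.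
have [a1 b1 c1] := b1_facts h1; rewrite -eqq in a1 b1 c1.
have [a2 b2 c2] := b2_facts h1; rewrite -eqq in a2 b2 c2.
have [a3 b3 c3] := b3_facts h1; rewrite -eqq in a3 b3 c3.
have c1' : forall t, 0 < t < 2 * (2 * h) -> exists2 n, n < 2 * (2 * (2 * h)) & iter t (perm_b1 (2 ^ r)) n != n.
  by move=> t tL; rewrite -eqq; exact: c1.
have [be1 [A1 [B1 [Lf1 T1 D1]]]] := Gs_data cK dK qL L1 Haa a1 b1 c1' Hf1.
have c2' : forall t, 0 < t < 2 * (2 * h) -> exists2 n, n < 2 * (2 * (2 * h)) & iter t (perm_b2 (2 ^ r)) n != n.
  by move=> t tL; rewrite -eqq; exact: c2.
have [be2 [A2 [B2 [Lf2 T2 D2]]]] := Gs_data cK dK qL L1 Haa a2 b2 c2' Hf2.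
have c3' : forall t, 0 < t < 2 * (2 * h) -> exists2 n, n < 2 * (2 * (2 * h)) & iter t (perm_b3 (2 ^ r)) n != n.
  by move=> t tL; rewrite -eqq; exact: c3.
have [be3 [A3 [B3 [Lf3 T3 D3]]]] := Gs_data cK dK qL L1 Haa a3 b3 c3' Hf3.
split.
- move=> e er g Kg; have [ga [Lg Tg Cg]] := Klein_data dK Kg.
  split => Heq.
  + have [sg [la H]] := equiv_unpack Lf1 Lg T1 Tg Heq.
    apply: (no_equiv_K D1 Cg H (e := (2 * h)%N)); lia.
  + have [sg' [la' H']] := equiv_unpack Lf2 Lg T2 Tg Heq.
    apply: (no_equiv_K D2 Cg H' (e := (2 * (2 * h) - 2)%N)); lia.
  + have [sg' [la' H']] := equiv_unpack Lf3 Lg T3 Tg Heq.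
    apply: (no_equiv_K D3 Cg H' (e := (2 * h - 2)%N)); lia.
- have D1' : Gdata be1 A1 B1 (2 * h + 1) (4 * h).
    by rewrite (_ : (4 * h = 2 * (2 * h))%N) //; lia.
  split => Heq.
  + have [sg [la H]] := equiv_unpack Lf1 Lf2 T1 T2 Heq.
    apply: (no_equiv_G1 _ D1' D2 H (e := (4 * h - 4)%N) (z := 1%N)); lia.
  + have [sg [la H]] := equiv_unpack Lf1 Lf3 T1 T3 Heq.
    apply: (no_equiv_G1 _ D1' D3 H (e := (4 * h - 4)%N) (z := 0%N)); lia.
  + have [sg [la H]] := equiv_unpack Lf2 Lf3 T2 T3 Heq.
    apply: (no_equiv_G2 _ D2 D3 H (e := (2 * h - 2)%N)); lia.
Qed.
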